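(* Let $R$ be a ring and $M$ a right $R$-module such that the ring $\operatorname{End}_R(M)$ has no factor ring isomorphic to $\mathbb{F}_2$. Then $\operatorname{End}_R(E(M))$ also has no factor ring isomorphic to $\mathbb{F}_2$, where $E(M)$ denotes the injective hull of $M$.
   Context: All rings are associative with identity; modules are unital right modules. $\mathbb{F}_2$ is the field with two elements. A ring $T$ ''has a factor isomorphic to $\mathbb{F}_2$'' if there is a two-sided ideal $I$ of $T$ with $T/I\cong \mathbb{F}_2$, equivalently if there exists a unital ring homomorphism $T\to\mathbb{F}_2$. *)

(* Defs.v *)
From HB Require Import structures.
From mathcomp Require Import all_boot all_order all_algebra.
Set Implicit Arguments. Unset Strict Implicit. Unset Printing Implicit Defensive.
Import GRing.Theory.
Local Open Scope ring_scope.

(* Right R-modules are modelled as left modules over the converse ring R^c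
   (MathComp's lmodType is for left modules); scalar action  v *: a  for
   a : R^c  is the right action  v . a. *)
Notation rmodType R := (lmodType (R^c)%type).

Definition End_R (R : pzRingType) (M : rmodType R) : Type :=
  {f : M -> M | linear f}.

(* End_R(M) has a factor ring isomorphic to F_2, i.e. there is a unital
   ring homomorphism End_R(M) -> F_2 (ring operations of End_R(M):
   pointwise addition, composition, identity). *)
Definition has_F2_factor_End (R : pzRingType) (M : rmodType R) : Prop :=
  exists phi : End_R M -> 'F_2,
    [/\ forall h : linear (@id M), phi (exist _ id h) = 1,
        forall (f g : M -> M) (hf : linear f) (hg : linear g)
               (hfg : linear (f \+ g)),
          phi (exist _ (f \+ g) hfg) = phi (exist _ f hf) + phi (exist _ g hg)
      & forall (f g : M -> M) (hf : linear f) (hg : linear g)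
               (hfg : linear (f \o g)),
          phi (exist _ (f \o g) hfg) = phi (exist _ f hf) * phi (exist _ g hg)].

Definition submodule (R : pzRingType) (M : rmodType R) (S : M -> Prop) : Prop :=
  [/\ S 0, forall x y, S x -> S y -> S (x + y) & forall (a : R^c) x, S x -> S (a *: x)].

Definition injective_module (R : pzRingType) (E : rmodType R) : Prop :=
  forall (A B : rmodType R) (i : A -> B) (f : A -> E),
    linear i -> injective i -> linear f ->
    exists g : B -> E, linear g /\ (forall a, g (i a) = f a).

Definition essential_mono (R : pzRingType) (M E : rmodType R) (i : M -> E) : Prop :=
  [/\ linear i, injective i &
      forall S : E -> Prop, submodule S -> (exists x, S x /\ x <> 0) ->
        exists m, S (i m) /\ i m <> 0].

Definition injective_hull (R : pzRingType) (M E : rmodType R) (i : M -> E) : Prop :=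
  essential_mono i /\ injective_module E.

(* Main.v *)
Require Import Defs.
From mathcomp Require Import all_boot all_order all_algebra.
From Stdlib Require Import ClassicalEpsilon ProofIrrelevance FunctionalExtensionality.
Import GRing.Theory.
Local Open Scope ring_scope.

Lemma F2_cases (x : 'F_2) : x = 0 \/ x = 1.
Proof. case: x => [[|[|//]]] ?; [left|right]; exact/val_inj. Qed.

Section Lin.
Variables (S : pzRingType) (U V W : lmodType S).

Lemma lin0 (f : U -> V) : linear f -> f 0 = 0.
Proof.
move=> hf; have := hf (-1) 0 0.
by rewrite scaler0 addr0 scaleN1r addNr.
Qed.

Lemma linD (f : U -> V) : linear f -> forall x y, f (x + y) = f x + f y.
Proof. by move=> hf x y; have := hf 1 x y; rewrite !scale1r. Qed.

Lemma linZ (f : U -> V) : linear f -> forall a x, f (a *: x) = a *: f x.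
Proof. by move=> hf a x; have := hf a x 0; rewrite !addr0 (lin0 f hf) addr0. Qed.

Lemma linN (f : U -> V) : linear f -> forall x, f (- x) = - f x.
Proof. by move=> hf x; rewrite -scaleN1r linZ // scaleN1r. Qed.

Lemma lin_id : linear (@id U).
Proof. by []. Qed.

Lemma lin_comp (f : V -> W) (g : U -> V) : linear f -> linear g -> linear (f \o g).
Proof. by move=> hf hg a u v; rewrite /= hg hf. Qed.

Lemma lin_add (f g : U -> V) : linear f -> linear g -> linear (f \+ g).
Proof.
move=> hf hg a u v; rewrite /= hf hg scalerDr.
by rewrite -!addrA; congr (_ + _); rewrite addrCA.
Qed.

Lemma lin_sub (f g : U -> V) : linear f -> linear g -> linear (f \- g).
Proof.
move=> hf hg a u v; rewrite /= hf hg scalerBr opprD.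
by rewrite -!addrA; congr (_ + _); rewrite addrCA.
Qed.
End Lin.

Lemma phi_ext (R : pzRingType) (E : rmodType R) (phi : End_R E -> 'F_2)
  (f1 f2 : E -> E) (h1 : linear f1) (h2 : linear f2) :
  f1 = f2 -> phi (exist _ f1 h1) = phi (exist _ f2 h2).
Proof. move=> e; subst f2; by rewrite (proof_irrelevance _ h1 h2). Qed.

Theorem lemma1 (R : pzRingType) (M E : rmodType R) (i : M -> E) :
  injective_hull i ->
  ~ has_F2_factor_End M ->
  ~ has_F2_factor_End E.
Proof.
move=> [[li ii ess] injE] noM [phi [phi1 phiD phiM]].
have key : forall (h k : E -> E) (hh : linear h) (hk : linear k),
    (forall m, h (i m) = k (i m)) -> phi (exist _ h hh) = phi (exist _ k hk).
  move=> h k hh hk hik.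
  pose d := h \- k.
  have ld : linear d by exact: lin_sub.
  have di : forall m, d (i m) = 0 by move=> m; rewrite /d /= hik subrr.
  have hkd : h = k \+ d by apply: functional_extensionality => x; rewrite /d /= addrC subrK.
  clearbody d.
  pose u := (@id E) \- d.
  have lu : linear u by exact: lin_sub.
  have uinj : injective u.
    move=> x y exy; case: (eqVneq x y) => // nxy.
    have [m [Sm nz]] : exists m, d (i m) = i m /\ i m <> 0.
      apply: (ess (fun z => d z = z)).
        split.
        - exact: lin0.
        - by move=> a b Ha Hb; rewrite linD // Ha Hb.
        - by move=> a b Hb; rewrite linZ // Hb.
      exists (x - y); split.
        have e1 : x = (y - d y) + d x by move: exy; rewrite /u /= => <-; rewrite subrK.
        rewrite linD // linN // {2}e1.
        by rewrite [in RHS]addrC !addrA addNr add0r addrC.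
      by move/eqP; rewrite subr_eq0 (negbTE nxy).
    by case: nz; rewrite -Sm di.
  have [g [lg hg]] := injE E E u id lu uinj (@lin_id _ E).
  have lgu : linear (g \o u) by exact: lin_comp.
  have : phi (exist _ (g \o u) lgu) = 1.
    rewrite (@phi_ext _ _ phi _ _ lgu (@lin_id _ E)); first exact: phi1.
    by apply: functional_extensionality => x; rewrite /= hg.
  rewrite phiM => gu1.
  have pu : phi (exist _ u lu) = 1.
    case: (F2_cases (phi (exist _ u lu))) => // e.
    by move: gu1; rewrite e mulr0.
  have lud : linear (u \+ d) by exact: lin_add.
  have : phi (exist _ (u \+ d) lud) = 1.
    rewrite (@phi_ext _ _ phi _ _ lud (@lin_id _ E)); first exact: phi1.
    by apply: functional_extensionality => x; rewrite /u /= subrK.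
  rewrite phiD pu => pd.
  have pd0 : phi (exist _ d ld) = 0.
    case: (F2_cases (phi (exist _ d ld))) => // e.
    by move: pd; rewrite e.
  have lkd : linear (k \+ d) by exact: lin_add.
  by rewrite (@phi_ext _ _ phi _ _ hh lkd hkd) phiD pd0 addr0.
have ext : forall g : M -> M, linear g ->
    {G : E -> E | linear G /\ forall m, G (i m) = i (g m)}.
  move=> g lg; apply: constructive_indefinite_description.
  have lig : linear (i \o g) by exact: lin_comp.
  have [G [lG hG]] := injE M E i (i \o g) li ii lig.
  by exists G.
pose psi := fun s : End_R M =>
  phi (exist _ (sval (ext (sval s) (svalP s))) (proj1 (svalP (ext (sval s) (svalP s))))).
have psiE : forall (g : M -> M) (lg : linear g) (G : E -> E) (lG : linear G),
    (forall m, G (i m) = i (g m)) -> psi (exist _ g lg) = phi (exist _ G lG).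
  move=> g lg G lG hG; rewrite /psi.
  case: (ext _ _) => G' [lG' hG'] /=.
  by apply: key => m; rewrite hG hG'.
apply: noM; exists psi; split.
- move=> h; rewrite (psiE _ h _ (@lin_id _ E)); first exact: phi1.
  by [].
- move=> f g hf hg hfg.
  case: (ext _ hf) => F [lF hF].
  case: (ext _ hg) => H [lH hH].
  have lFH : linear (F \+ H) by exact: lin_add.
  rewrite (psiE _ hfg _ lFH); last by move=> m; rewrite /= hF hH linD.
  by rewrite phiD (psiE _ hf _ lF) // (psiE _ hg _ lH).
- move=> f g hf hg hfg.
  case: (ext _ hf) => F [lF hF].
  case: (ext _ hg) => H [lH hH].
  have lFH : linear (F \o H) by exact: lin_comp.
  rewrite (psiE _ hfg _ lFH); last by move=> m; rewrite /= hH hF.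
  by rewrite phiM (psiE _ hf _ lF) // (psiE _ hg _ lH).
Qed.
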